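(* Let $S=[m,M]\cap\mathbb{N}$ with integers $0\leq m\leq M$, let $d\in(0,\frac12)$, and let $(G_t=(V_t,E_t))_{t\geq0}$ be a dynamic graph generated by D3G3 with $S_S=S_C=S$ and threshold $d$. Let $n_t=|V_t|$ and let $s_t=|V_t\cap V_{t+1}|$ be the number of vertices surviving from step $t$ to step $t+1$. Then, whenever $V_t\neq\emptyset$, $$\mathcal{N}^V_t=\frac{n_t}{n_t+s_t}.$$
   Context: Let $\mathbb{T}=[0,1)^2$ be the unit torus with toroidal Euclidean distance; a geometric graph with threshold $d$ on a finite point set has edges between distinct points at distance $\leq d$. D3G3 takes $d$, sets $S_S,S_C\subseteq\mathbb{N}$ and a non-null seed geometric graph $G_0$. From $G_t$, $G_{t+1}$ is obtained by applying simultaneously to each $v\in V_t$ (with $\deg(v)$ its degree in $G_t$): $v\in V_{t+1}$ (same position) iff $\deg(v)\in S_S$; if $\deg(v)\in S_C$, a brand new vertex (distinct from all vertices ever present) is added to $V_{t+1}$ at a uniformly random position. No other vertices are in $V_{t+1}$; $E_{t+1}$ follows the geometric rule. The vertices nervousness is $\mathcal{N}^V_t=\frac{|V_{t+1}\triangle V_t|}{|V_{t+1}\cup V_t|}$ with $A\triangle B=(A\cup B)\setminus(A\cap B)$. *)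

(* Defs.v *)
From HB Require Import structures.
From mathcomp Require Import all_boot all_order all_algebra.
From mathcomp Require Import finmap.
From mathcomp Require Import reals.
Set Implicit Arguments. Unset Strict Implicit. Unset Printing Implicit Defensive.
Import Order.TTheory GRing.Theory Num.Theory.
Local Open Scope ring_scope.
Local Open Scope fset_scope.

Section D3G3.
Variable R : realType.

Definition point := (R * R)%type.

Definition in_torus (p : point) : bool :=
  (0 <= p.1 < 1) && (0 <= p.2 < 1).

Definition tdist1 (a b : R) : R := Num.min `|a - b| (1 - `|a - b|).

Definition tdist (p q : point) : R :=
  Num.sqrt (tdist1 p.1 q.1 ^+ 2 + tdist1 p.2 q.2 ^+ 2).

Definition gdeg (d : R) (pos : nat -> point) (V : {fset nat}) (v : nat) : nat :=
  #|` [fset u in V | (u != v) && (tdist (pos u) (pos v) <= d)] |.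

(* One D3G3 step from V to V' (vertices are identifiers in nat, each with
   a fixed position pos).  child v is the brand-new vertex created by v. *)
Definition D3G3_step (d : R) (SS SC : pred nat) (pos : nat -> point)
    (past : nat -> bool) (V V' : {fset nat}) : Prop :=
  exists child : nat -> nat,
    let creators := [fset v in V | SC (gdeg d pos V v)] in
    [/\ V' = [fset v in V | SS (gdeg d pos V v)] `|` [fset child v | v in creators],
        {in creators &, injective child},
        {in creators, forall v, ~~ past (child v)}
      & {in creators, forall v, in_torus (pos (child v))}].

(* A dynamic graph (V_t)_t generated by D3G3 from a non-null seed.
   past t x  <=>  x was present at some time s <= t. *)
Definition is_D3G3 (d : R) (SS SC : pred nat) (V : nat -> {fset nat})
    (pos : nat -> point) : Prop :=
  [/\ V 0%N != fset0,
      {in V 0%N, forall v, in_torus (pos v)}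
    & forall t : nat,
        D3G3_step d SS SC pos (fun x => [exists s : 'I_t.+1, x \in V s]) (V t) (V t.+1)].

Definition vnervousness (V : nat -> {fset nat}) (t : nat) : R :=
  let A := V t.+1 in let B := V t in
  (#|` (A `|` B) `\` (A `&` B)|)%:R / (#|` A `|` B|)%:R.

Definition natint (m M : nat) : pred nat := fun k => (m <= k <= M)%N.

End D3G3.

(* Main.v *)
Require Import Defs.
From HB Require Import structures.
From mathcomp Require Import all_boot all_order all_algebra.
From mathcomp Require Import finmap.
From mathcomp Require Import reals.
From mathcomp Require Import zify.
Import Order.TTheory GRing.Theory Num.Theory.
Local Open Scope ring_scope.
Local Open Scope fset_scope.

Theorem theorem12 (R : realType) (m M : nat) (hmM : (m <= M)%N) (d : R)
    (hd : 0 < d < 2^-1) (V : nat -> {fset nat}) (pos : nat -> point R)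
    (hG : is_D3G3 d (natint m M) (natint m M) V pos) (t : nat) :
  V t != fset0 ->
  vnervousness R V t =
    (#|` V t|)%:R / (#|` V t|%N + #|` V t `&` V t.+1|%N)%:R.
Proof.
move=> _; case: hG => _ _ /(_ t) [child [hA hinj hnew _]].
set S := [fset v in V t | natint m M (gdeg d pos (V t) v)] in hA hinj hnew.
set C := [fset child v | v in S] in hA.
have SB : S `<=` V t by apply/fsubsetP => x; rewrite inE /= => /andP[].
have CB : forall x, x \in C -> x \notin V t.
  move=> x /imfsetP [v /= vS ->]; apply/negP => xB.
  move: (hnew v vS) => /negP; apply; apply/existsP; exists ord_max => //.
have SC0 : S `&` C = fset0.
  apply/fsetP => x; rewrite in_fsetI in_fset0; apply/negP => /andP[xS xC].
  by move: (CB x xC); rewrite (fsubsetP SB x xS).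
have cC : #|` C| = #|` S|.
  by rewrite card_in_imfset //= => x y xS yS; apply: hinj.
have cA : #|` V t.+1| = (#|` S| + #|` S|)%N.
  by rewrite hA cardfsU SC0 cardfs0 cC subn0.
have IS : V t.+1 `&` V t = S.
  apply/fsetP => x; rewrite hA in_fsetI in_fsetU; apply/idP/idP.
  - case/andP => /orP [xS|xC] xB //.
    by move: (CB x xC); rewrite xB.
  - by move=> xS; rewrite xS (fsubsetP SB x xS).
have IS' : V t `&` V t.+1 = S by rewrite fsetIC.
have cU := cardfsUI (V t.+1) (V t).
rewrite /vnervousness cardfsDS; last first.
  apply/fsubsetP => x; rewrite !inE => /andP[-> _] //.
rewrite IS IS' in cU *; rewrite cA in cU.
have -> : #|` V t.+1 `|` V t| = (#|` V t| + #|` S|)%N by lia.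
by rewrite addnK.
Qed.
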